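(* Let $P\subset\mathbb{Z}^2_{\ge0}$ be a B-polytope. Then, after possibly interchanging the two coordinates, one of the following holds: (1) ($B_1$-polytope) exactly one point of $P$ has nonzero second coordinate, this point is $(a,1)$ for some integer $a\ge0$, and $P$ contains at least two points with second coordinate $0$; (2) (border polytope) $P=\{(0,1),(1,1)\}\cup S\cup T$, where $S$ is a nonempty subset of $\{(c,0): c\in\mathbb{Z},\ c\ge1\}$ and $T\subseteq\{(0,0)\}$.
   Context: A $k$-simplex is a set of $k+1$ affinely independent points; a $k$-simplex $S\subset\mathbb{Z}^m_{\ge0}$ is a B-simplex if there is an index $i$ with exactly $k$ vertices in $\{x_i=0\}$ and the remaining vertex having $x_i=1$ (for $k=0$: the point has some coordinate equal to $1$). A B-polytope in $\mathbb{Z}^m_{\ge0}$ is a finite set $P\subset\mathbb{Z}^m_{\ge0}$ whose affine span has dimension $m$ such that every $(m-1)$-simplex with vertices in $P$ either is a B-simplex or has affine span containing the origin. (For $m=2$: every segment joining two distinct points of $P$ either is a B-simplex or lies on a line through the origin.) *)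

(* Defs.v *)
From mathcomp Require Import all_boot.

Set Implicit Arguments. Unset Strict Implicit. Unset Printing Implicit Defensive.

Definition pt := (nat * nat)%type.

(* A 1-simplex {p, q} (p <> q) in Z^2_{>=0} is a B-simplex iff for some
   coordinate i, exactly one of p, q has x_i = 0 and the other has x_i = 1. *)
Definition coord (i : bool) (p : pt) : nat := if i then p.2 else p.1.

Definition B_segment (p q : pt) : Prop :=
  exists i : bool,
    (coord i p = 0 /\ coord i q = 1) \/ (coord i q = 0 /\ coord i p = 1).

(* The line through distinct p, q contains the origin iff det(p, q) = 0. *)
Definition line_through_origin (p q : pt) : Prop := p.1 * q.2 = p.2 * q.1.

Definition affinely_full (P : seq pt) : Prop :=
  exists a b c, [/\ a \in P, b \in P, c \in P &
    (* twice the signed area of triangle abc is nonzero, written over nat *)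
    a.1 * b.2 + b.1 * c.2 + c.1 * a.2 != a.2 * b.1 + b.2 * c.1 + c.2 * a.1].

Definition B_polytope2 (P : seq pt) : Prop :=
  affinely_full P /\
  forall p q, p \in P -> q \in P -> p <> q ->
    B_segment p q \/ line_through_origin p q.

Definition swapP (P : seq pt) : seq pt := map (fun p => (p.2, p.1)) P.

Definition B1_polytope (P : seq pt) : Prop :=
  (exists a : nat, (a, 1) \in P /\ forall p, p \in P -> p.2 != 0 -> p = (a, 1)) /\
  (exists p q, [/\ p \in P, q \in P, p != q, p.2 = 0 & q.2 = 0]).

Definition border_polytope (P : seq pt) : Prop :=
  exists S T : seq pt,
    [/\ S != [::], (forall s, s \in S -> s.2 = 0 /\ 1 <= s.1),
        (forall t, t \in T -> t = (0, 0)) &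
        P =i [:: (0, 1); (1, 1)] ++ S ++ T].

(* Main.v *)
Require Import Defs.
From mathcomp Require Import all_boot.
From mathcomp Require Import zify.
From Stdlib Require Import Classical.

Lemma colin p1 p2 a1 a2 b1 b2 : 0 < p1 -> p1*a2 = p2*a1 -> p1*b2 = p2*b1 -> a1*b2 = a2*b1.
Proof.
move=> h ea eb. apply/eqP; rewrite -(eqn_pmul2l h); apply/eqP.
rewrite mulnA (mulnC p1 a1) -mulnA eb mulnA (mulnC a1 p2) -ea.
by rewrite -mulnA (mulnC a2 b1) mulnA.
Qed.

Lemma no_big P : B_polytope2 P -> forall p, p \in P -> p.1 <= 1 \/ p.2 <= 1.
Proof.
move=> [[a [b [c [Ha Hb Hc Hdet]]]] H] [p1 p2] Hp /=.
case: (leqP p1 1) => h1; first by left.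
case: (leqP p2 1) => h2; first by right.
exfalso.
have col : forall r, r \in P -> p1 * r.2 = p2 * r.1.
  move=> [r1 r2] Hr /=. case: (eqVneq (p1,p2) (r1,r2)) => [[-> ->]|ne]; first by rewrite mulnC.
  move/eqP: ne => ne.
  case: (H _ _ Hp Hr ne) => [[[|] [[/= e1 e2]|[/= e1 e2]]]|]; try lia.
  by rewrite /line_through_origin /=.
have p0 : 0 < p1 by lia.
have ab := colin _ _ _ _ _ _ p0 (col a Ha) (col b Hb).
have bc := colin _ _ _ _ _ _ p0 (col b Hb) (col c Hc).
have ca := colin _ _ _ _ _ _ p0 (col c Hc) (col a Ha).
by move: Hdet; rewrite ab bc ca eqxx.
Qed.

Lemma ylt P : B_polytope2 P ->
  (forall p, p \in P -> p.2 <= 1) \/ (forall p, p \in P -> p.1 <= 1).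
Proof.
move=> BP; have NB := no_big _ BP; case: BP => _ H.
case: (classic (exists p, p \in P /\ 2 <= p.2)) => [[p [Hp h2]]|nex]; last first.
  left => q Hq; apply: NNPP => hq; apply: nex; exists q; split => //; lia.
right => q Hq; apply: NNPP => hq.
have hp1 : p.1 <= 1 by case: (NB p Hp) => //; lia.
have hq2 : q.2 <= 1 by case: (NB q Hq) => //; lia.
have ne : p <> q by move=> e; subst; lia.
move: hp1 hq2 h2 hq; case: p Hp ne => p1 p2 Hp ne; case: q Hq ne => q1 q2 Hq ne /= *.
case: (H _ _ Hp Hq ne) => [[[|] [[/= e1 e2]|[/= e1 e2]]]|]; try lia.
rewrite /line_through_origin /=; nia.
Qed.
Lemma swap_mem P p : (p \in swapP P) = ((p.2, p.1) \in P).
Proof.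
case: p => p1 p2 /=; apply/mapP/idP => [[[q1 q2] Hq [-> ->]] //|H].
by exists (p2, p1).
Qed.

Lemma swapK P : swapP (swapP P) = P.
Proof. by elim: P => //= [[x1 x2] s] ->. Qed.

Lemma swap_B P : B_polytope2 P -> B_polytope2 (swapP P).
Proof.
move=> [[a [b [c [Ha Hb Hc Hdet]]]] H]; split.
  move: a b c Ha Hb Hc Hdet => [a1 a2] [b1 b2] [c1 c2] Ha Hb Hc Hdet.
  exists (a2, a1), (b2, b1), (c2, c1); rewrite !swap_mem /=.
  split => //; apply/eqP => e; move: Hdet => /=; lia.
move=> [p1 p2] [q1 q2]; rewrite !swap_mem /= => Hp Hq ne.
have ne' : (p2, p1) <> (q2, q1) by case=> e1 e2; apply: ne; rewrite e1 e2.
case: (H _ _ Hp Hq ne') => [[i [[e1 e2]|[e1 e2]]]|e].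
- by left; exists (~~ i); left; case: i e1 e2.
- by left; exists (~~ i); right; case: i e1 e2.
- by right; move: e; rewrite /line_through_origin /=; lia.
Qed.

Lemma ymain Q : B_polytope2 Q -> (forall p, p \in Q -> p.2 <= 1) ->
  B1_polytope Q \/ border_polytope Q \/ B1_polytope (swapP Q).
Proof.
move=> [[a [b [c [Ha Hb Hc Hdet]]]] H] Hy.
case: (classic (exists p q, [/\ p \in Q, q \in Q, p.2 = 1, q.2 = 1 & p <> q])).
  move=> [[p1 p2] [[q1 q2] [Hp Hq /= e1 e2 ne]]]; subst p2 q2.
  have pq : (p1 == 0) && (q1 == 1) || (p1 == 1) && (q1 == 0).
    case: (H _ _ Hp Hq ne) => [[[|] [[/= f1 f2]|[/= f1 f2]]]|]; try lia.
    rewrite /line_through_origin /= => e; exfalso; apply: ne; congr pair; lia.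
  have H01 : (0, 1) \in Q by case/orP: pq => /andP [/eqP e /eqP f]; subst.
  have H11 : (1, 1) \in Q by case/orP: pq => /andP [/eqP e /eqP f]; subst.
  have Y1 : forall r, r \in Q -> r.2 = 1 -> r = (0, 1) \/ r = (1, 1).
    move=> [r1 r2] Hr /= e; subst r2.
    case: (eqVneq (r1, 1) (0, 1)) => [->|/eqP ner]; first by left.
    case: (H _ _ Hr H01 ner) => [[[|] [[/= f1 f2]|[/= f1 f2]]]|]; try lia.
      by right; congr pair; lia.
    rewrite /line_through_origin /= => e; exfalso; apply: ner; congr pair; lia.
  case: (classic (exists s, s \in Q /\ s.2 = 0 /\ 1 <= s.1)).
    move=> [s [Hs [s2 s1]]]; right; left.
    exists [seq s <- Q | (s.2 == 0) && (1 <= s.1)], [seq t <- Q | t == (0, 0)].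
    split.
    - apply/eqP => e. have : s \in [seq s <- Q | (s.2 == 0) && (1 <= s.1)].
        by rewrite mem_filter Hs s2 s1.
      by rewrite e.
    - by move=> t; rewrite mem_filter => /andP [/andP [/eqP -> ->]].
    - by move=> t; rewrite mem_filter => /andP [/eqP].
    move=> x; rewrite !mem_cat !mem_filter !inE.
    apply/idP/idP.
      move=> Hx; have := Hy _ Hx; case: x Hx => x1 x2 Hx /= hx2.
      case: (eqVneq x2 1) => [e|ne2].
        by subst; case: (Y1 _ Hx erefl) => [[->]|[->]].
      have e0 : x2 = 0 by lia. subst x2.
      rewrite Hx eqxx /=; case: x1 Hx {hx2 ne2} => [|n] Hx; rewrite ?Hx ?orbT //.
    by case/orP => [/orP [/eqP->|/eqP->] //|/orP [/andP [_ ->] | /andP [_ ->]]].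
  move=> nex; right; right.
  have sub : forall r, r \in Q -> r = (0, 1) \/ r = (1, 1) \/ r = (0, 0).
    move=> [r1 r2] Hr; have := Hy _ Hr => /=; case: (eqVneq r2 1) => [e _|ne2 h].
      by case: (Y1 _ Hr e) => ->; [left|right; left].
    have e2 : r2 = 0 by move/eqP: ne2; lia. subst r2.
    case: r1 Hr => [|r1] Hr; first by right; right.
    by exfalso; apply: nex; exists (r1.+1, 0); split => //; rewrite /=; split.
  have H00 : (0, 0) \in Q.
    apply: NNPP => n00; move: Hdet.
    have f : forall r, r \in Q -> r.2 = 1.
      move=> r Hr; case: (sub r Hr) => [->|[->|e]] //; by subst.
    by rewrite (f a Ha) (f b Hb) (f c Hc) !muln1 !mul1n => /eqP; apply; lia.
  split.
    exists 1; split; first by rewrite swap_mem.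
    move=> [z1 z2]; rewrite swap_mem /= => Hz; case: (sub _ Hz) => [[-> ->]|[[-> ->]|[-> ->]]] //.
  exists (1, 0), (0, 0); split => //; by rewrite swap_mem.
move=> nex; left.
have uniq1 : forall p q, p \in Q -> q \in Q -> p.2 = 1 -> q.2 = 1 -> p = q.
  move=> p q Hp Hq e1 e2; apply: NNPP => ne; apply: nex; by exists p, q.
have Y : forall r, r \in Q -> r.2 = 0 \/ r.2 = 1.
  by move=> r Hr; have := Hy _ Hr; lia.
case: (classic (exists r, r \in Q /\ r.2 = 1)) => [[[r1 r2] [Hr /= e]]|nr]; last first.
  exfalso; move: Hdet.
  have f : forall r, r \in Q -> r.2 = 0.
    move=> r Hr; case: (Y r Hr) => // e; exfalso; apply: nr; by exists r.
  by rewrite (f a Ha) (f b Hb) (f c Hc) !muln0.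
subst r2; split.
  exists r1; split => // p Hp n0; apply: uniq1 => //; case: (Y p Hp) => //; lia.
apply: NNPP => n2.
have eq0 : forall p q, p \in Q -> q \in Q -> p.2 = 0 -> q.2 = 0 -> p = q.
  move=> p q Hp Hq e1 e2; apply/eqP; apply: NNPP => /negP ne; apply: n2.
  by exists p, q; split.
have f : forall x, x \in Q -> x = (r1, 1) \/ x.2 = 0.
  move=> x Hx; case: (Y x Hx) => e; [by right | left; exact: uniq1].
move: Hdet.
case: (f a Ha) => [->|ea]; case: (f b Hb) => [->|eb]; case: (f c Hc) => [->|ec] /=;
  try (rewrite ?(eq0 _ _ Hb Hc eb ec) ?(eq0 _ _ Ha Hc ea ec) ?(eq0 _ _ Ha Hb ea eb));
  try (rewrite ?ea ?eb ?ec /=); apply/negP; rewrite negbK; apply/eqP; lia.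
Qed.

Theorem lemma3p4 (P : seq pt) :
  B_polytope2 P ->
  exists Q : seq pt, (Q = P \/ Q = swapP P) /\ (B1_polytope Q \/ border_polytope Q).
Proof.
move=> BP; case: (ylt _ BP) => [hy|hx].
  case: (ymain _ BP hy) => [h|[h|h]].
  - by exists P; auto.
  - by exists P; auto.
  - by exists (swapP P); auto.
have BS := swap_B _ BP.
have hy : forall p, p \in swapP P -> p.2 <= 1.
  by move=> [p1 p2]; rewrite swap_mem => /hx.
case: (ymain _ BS hy) => [h|[h|h]].
- by exists (swapP P); auto.
- by exists (swapP P); auto.
- by exists P; split; [left | left; rewrite swapK in h].
Qed.
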